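(* Let $p^{(3)}(n)$ be defined by $\sum_{n\ge0}p^{(3)}(n)q^n=\prod_{j\ge1}(1-q^j)^{-3}$ (the number of three-colored partitions of $n$). Then for every $n\ge0$, $$p^{(3)}(n)=\sum_{\substack{c\in\mathcal C_{P_3}\\ |c|=n}}\ \prod_{j\ge1}\big((-1)^{j+1}(2j+1)\big)^{m_{j(j+1)/2}(c)}=\sum_{\substack{c\in\mathcal C_{P_3}\\ |c|=n}}(-1)^{\ell^+(c)}\prod_{j\ge1}(2j+1)^{m_{j(j+1)/2}(c)},$$ where $P_3=\{j(j+1)/2:j\in\mathbb N\}$.
   Context: A composition is an ordered finite sequence of positive integers (including the empty one); $|c|$ is the sum of parts; $m_i(c)$ is the number of parts of $c$ equal to $i$; $\mathcal C_T$ is the set of compositions with all parts in $T$. $\ell^+(c)$ is the number of parts of $c$ lying in $\{m(2m+1): m\in\mathbb N\}$ (the triangular numbers $j(j+1)/2$ with $j$ even). *)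

(* Defs.v *)
From mathcomp Require Import all_boot all_order all_algebra.
Set Implicit Arguments. Unset Strict Implicit. Unset Printing Implicit Defensive.
Import GRing.Theory Num.Theory.
Local Open Scope ring_scope.

(* p^(3)(n): coefficient of q^n in prod_{j>=1} (1-q^j)^(-3).  Modulo q^(n+1),
   (1-q^j)^(-1) = sum_{k=0}^{n} q^(j k), and factors with j > n are = 1. *)
Definition p3 (n : nat) : int :=
  (\prod_(1 <= j < n.+1) (\sum_(0 <= k < n.+1) ('X^(j * k) : {poly int})) ^+ 3)`_n.

Definition tri (j : nat) : nat := (j * j.+1) %/ 2.

Definition P3 : pred nat := fun m => has (fun j => tri j == m) (iota 0 m.+1).

Definition Pplus : pred nat := fun x => has (fun m => m * (2 * m).+1 == x)%N (iota 0 x.+1).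

Definition in_comps (T : pred nat) (c : seq nat) : bool :=
  all (fun x => (0 < x)%N && T x) c.

Definition mult (i : nat) (c : seq nat) : nat := count_mem i c.

Definition ellplus (c : seq nat) : nat := count Pplus c.

(* sum of F c over all compositions c in C_T with |c| = n.  Such a c has
   length l <= n and all parts <= n, so it is exactly one sequence
   [seq val (f i) | i <- enum 'I_l] with l < n.+1 and f : 'I_l -> 'I_n.+1. *)
Definition comp_seq (l n : nat) (f : {ffun 'I_l -> 'I_n.+1}) : seq nat :=
  [seq nat_of_ord (f i) | i <- enum 'I_l].

Definition sum_comps (T : pred nat) (n : nat) (F : seq nat -> int) : int :=
  \sum_(l < n.+1) \sum_(f : {ffun 'I_l -> 'I_n.+1} |
        in_comps T (comp_seq f) && (sumn (comp_seq f) == n)) F (comp_seq f).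

(* prod_{j>=1} ((-1)^(j+1)(2j+1))^(m_{j(j+1)/2}(c)); only j <= |c| can have
   nonzero exponent, all other factors are 1. *)
Definition weight1 (c : seq nat) : int :=
  \prod_(1 <= j < (sumn c).+1) ((-1) ^+ j.+1 * (2 * j).+1%:R) ^+ mult (tri j) c.

Definition weight2 (c : seq nat) : int :=
  (-1) ^+ ellplus c * \prod_(1 <= j < (sumn c).+1) ((2 * j).+1%:R) ^+ mult (tri j) c.

(* Main.v *)
Require Import Defs.
From mathcomp Require Import all_boot all_order all_algebra.
From mathcomp Require Import zify ring.
Set Implicit Arguments. Unset Strict Implicit. Unset Printing Implicit Defensive.
Import GRing.Theory Num.Theory.
Local Open Scope ring_scope.

Lemma triE j : tri j = 'C(j.+1, 2).
Proof. by rewrite /tri bin2 /= mulnC -divn2. Qed.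

Lemma triS j : tri j.+1 = (tri j + j.+1)%N.
Proof. by rewrite !triE binS bin1. Qed.

Lemma tri0 : tri 0 = 0%N. Proof. by []. Qed.

Lemma tri_ge j : (j <= tri j)%N.
Proof. elim: j => // j IH; rewrite triS; lia. Qed.

Lemma tri_lt j k : (j < k)%N -> (tri j < tri k)%N.
Proof.
elim: k => // k IH; rewrite ltnS leq_eqVlt => /orP[/eqP->|/IH h]; rewrite triS; lia.
Qed.

Lemma tri_inj : injective tri.
Proof.
move=> j k e; case: (ltngtP j k) => // /tri_lt; rewrite e ltnn //.
Qed.

Lemma tri_add a b : tri (a + b) = (tri a + tri b + a * b)%N.
Proof. elim: b => [|b IH]; first by rewrite tri0 !addn0 muln0 addn0. rewrite addnS !triS IH. lia. Qed.

Lemma tri_double m : tri (2 * m) = (m * (2 * m).+1)%N.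
Proof. by rewrite /tri -mulnA mulKn. Qed.

Lemma Pplus_tri j : Pplus (tri j) = ~~ odd j.
Proof.
apply/hasP/idP.
  case=> m _ /eqP e. rewrite -tri_double in e. move/tri_inj: e <-.
  by rewrite mul2n odd_double.
move=> ev; exists j./2.
  rewrite mem_iota /= add0n ltnS (leq_trans _ (tri_ge j)) // leq_half_double; lia.
by rewrite -tri_double -{2}(odd_double_half j) (negbTE ev) add0n -muln2 mulnC.
Qed.
Notation P := {poly int}.

Fixpoint qbin (M j : nat) : P :=
  match M, j with
  | 0, 0 => 1
  | 0, _.+1 => 0
  | M'.+1, 0 => 1
  | M'.+1, j'.+1 => qbin M' j'.+1 + 'X^(M' - j') * qbin M' j'
  end.

Definition fac (m : nat) : P := \prod_(0 <= i < m) (1 - 'X^(i.+1)).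

Lemma facS m : fac m.+1 = fac m * (1 - 'X^(m.+1)).
Proof. by rewrite /fac big_nat_recr. Qed.

Lemma fac0 : fac 0 = 1. Proof. by rewrite /fac big_geq. Qed.

Lemma qbin_gt M j : (M < j)%N -> qbin M j = 0.
Proof.
elim: M j => [|M IH] [|j] //= h.
by rewrite !IH ?mulr0 ?addr0 //; lia.
Qed.

Lemma qbin0 M : qbin M 0 = 1. Proof. by case: M. Qed.

Lemma qbin_prod M a : (a <= M)%N -> qbin M a * fac a * fac (M - a) = fac M.
Proof.
elim: M a => [|M IH] [|i] //=.
- by rewrite fac0 !mulr1.
- by rewrite fac0 subn0 !mul1r.
- rewrite ltnS leq_eqVlt => /orP[/eqP->|lt].
    rewrite qbin_gt ?ltnSn // add0r subnn facS subnn expr0 mul1r.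
    have := IH M (leqnn M); rewrite subnn fac0 mulr1 => h.
    by rewrite mulr1 mulrA h.
  have e : (M - i = (M - i.+1).+1)%N by lia.
  rewrite subSS e facS -e.
  have h1 := IH i.+1 lt. have h2 := IH i (ltnW lt).
  have eX : ('X^(M.+1) : P) = 'X^(M - i) * 'X^(i.+1) by rewrite -exprD; congr (_ ^+ _); lia.
  rewrite facS eX.
  transitivity ((qbin M i.+1 * fac i.+1 * fac (M - i.+1)) * (1 - 'X^(M - i))
     + 'X^(M - i) * (qbin M i * fac i * fac (M - i)) * (1 - 'X^(i.+1))).
    rewrite facS e facS -e; ring.
  rewrite h1 h2; ring.
Qed.

Lemma fac_neq0 m : fac m != 0.
Proof.
rewrite /fac prodf_seq_neq0; apply/allP => i _ /=.
apply/eqP => /(congr1 (fun p : P => p`_0)).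
rewrite coefB coef1 coefXn /= subr0 coef0 => /eqP; by rewrite oner_eq0.
Qed.

Lemma qbin_sym M a : (a <= M)%N -> qbin M a = qbin M (M - a).
Proof.
move=> h.
have h1 := qbin_prod h.
have h2 := qbin_prod (leq_subr a M).
rewrite subKn // in h2.
apply: (mulIf (fac_neq0 (M - a))); apply: (mulIf (fac_neq0 a)).
rewrite /= -mulrA [fac (M - a) * _]mulrC mulrA h1.
by rewrite -h2.
Qed.
Notation PP := {poly P}.
Definition cc (a : nat) : PP := ('X^a : P)%:P.
Definition QQ (M : nat) : PP := \prod_(0 <= l < M) (1 - cc l.+1 * 'X).

Lemma coef_lin (p : PP) a j :
  (p * (1 - cc a * 'X))`_j = p`_j - (if j is j'.+1 then 'X^a * p`_j' else 0).
Proof.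
rewrite mulrBr mulr1 coefB mulrA coefMX; case: j => //= j.
by rewrite /cc coefMC mulrC.
Qed.

Lemma cauchy M j : (QQ M)`_j = (-1) ^+ j * 'X^(tri j) * qbin M j.
Proof.
elim: M j => [|M IH] j.
  rewrite /QQ big_geq // coef1; case: j => [|j].
    by rewrite tri0 !expr0 !mul1r.
  by rewrite /= mulr0.
rewrite /QQ big_nat_recr //= -/(QQ M) coef_lin IH.
case: j => [|i] /=; first by rewrite subr0 qbin0.
rewrite IH triS exprS.
case: (leqP i M) => hi.
  have e : ('X^(M.+1) : P) * 'X^(tri i) = 'X^(tri i + i.+1) * 'X^(M - i).
    by rewrite -!exprD; congr (_ ^+ _); lia.
  rewrite exprD.
  transitivity (- ((-1) ^+ i * ('X^(tri i) * 'X^(i.+1) * qbin M i.+1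
        + ('X^(M.+1) * 'X^(tri i)) * qbin M i))); first ring.
  rewrite e -exprD; ring.
rewrite (qbin_gt hi) (@qbin_gt M i.+1) ?(@qbin_gt M.+1 i.+1); try lia.
ring.
Qed.

Lemma ccD a b : cc (a + b) = cc a * cc b.
Proof. by rewrite /cc exprD polyCM. Qed.

Lemma cc0 : cc 0 = 1. Proof. by rewrite /cc expr0. Qed.

Lemma coef_comp_scale (p : PP) (a : P) j :
  (p \Po (a%:P * 'X))`_j = a ^+ j * p`_j.
Proof.
rewrite coef_comp_poly.
under eq_bigr => i _ do rewrite exprMn -polyC_exp coefCM coefXn.
case: (ltnP j (size p)) => hj.
  rewrite (bigD1 (Ordinal hj)) //= eqxx mulr1 big1 ?addr0; first by rewrite mulrC.
  move=> i /eqP ne; rewrite (_ : (j == i) = false) ?mulr0 //.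
  by apply/eqP => e; apply: ne; apply: val_inj; rewrite /= e.
rewrite big1; last first.
  move=> i _; rewrite (_ : (j == i) = false) ?mulr0 //.
  by apply/negbTE; rewrite neq_ltn (leq_trans (ltn_ord i) hj) orbT.
by rewrite (leq_sizeP _ _ hj) // mulr0.
Qed.

Lemma comp_cc a (q : PP) : cc a \Po q = cc a.
Proof. exact: comp_polyC. Qed.
Lemma comp_one (q : PP) : 1 \Po q = 1.
Proof. by rewrite -polyC1 comp_polyC. Qed.

Definition HH (n : nat) : PP :=
  \prod_(0 <= i < n) (1 - cc i.+1 * 'X) * \prod_(0 <= i < n.+1) ('X - cc i).

Lemma prod_cc (m : nat) : \prod_(0 <= i < m) cc i = cc (\sum_(0 <= i < m) i).
Proof.
elim: m => [|m IH]; first by rewrite !big_geq // cc0.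
by rewrite !big_nat_recr //= IH ccD.
Qed.

Lemma HH_comp n :
  HH n \Po (cc n.+1 * 'X) = ((-1) ^+ n.+1 * 'X^(tri n))%:P * QQ (n.+1 + n).
Proof.
rewrite /HH comp_polyM !rmorph_prod /=.
have e1 : forall i, (1 - cc i.+1 * 'X) \Po (cc n.+1 * 'X) = 1 - cc (i + n.+1).+1 * 'X.
  move=> i; rewrite comp_polyB comp_polyM comp_polyX comp_cc comp_one.
  by rewrite mulrA -ccD addSn.
have e2 : forall i, (i < n.+1)%N ->
   ('X - cc i) \Po (cc n.+1 * 'X) = - cc i * (1 - cc (n - i).+1 * 'X).
  move=> i hi; rewrite comp_polyB comp_polyX comp_cc.
  rewrite mulNr mulrBr mulr1 mulrA -ccD (_ : (i + (n - i).+1 = n.+1)%N); last by lia.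
  by rewrite opprB.
under eq_bigr => i _ do rewrite e1.
rewrite big_nat_cond [X in _ * X]big_nat_cond.
under [X in _ * X]eq_bigr => i /andP[/andP[_ hi] _] do rewrite (e2 i hi).
rewrite -!big_nat_cond big_split /=.
have h1 : \prod_(0 <= i < n.+1) (- cc i) = ((-1) ^+ n.+1 * 'X^(tri n))%:P.
  rewrite (eq_bigr (fun i => (-1) * cc i)) => [|i _]; last by rewrite mulN1r.
  rewrite big_split /= prodr_const_nat prod_cc bin2_sum -triE subn0.
  by rewrite polyCM polyC_exp polyCN.
have h2 : \prod_(0 <= i < n.+1) (1 - cc (n - i).+1 * 'X) =
          \prod_(0 <= i < n.+1) (1 - cc i.+1 * 'X).
  rewrite big_rev_mkord big_mkord subn0; apply: eq_bigr => i _.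
  by rewrite subSS subKn // -ltnS.
have h3 : QQ (n.+1 + n) = \prod_(0 <= i < n.+1) (1 - cc i.+1 * 'X) *
     \prod_(0 <= i < n) (1 - cc (i + n.+1).+1 * 'X).
  rewrite /QQ (@big_cat_nat _ _ _ n.+1) ?leq_addr //=.
  have := big_addn 0 (n.+1 + n) n.+1 xpredT (fun i => 1 - cc i.+1 * 'X).
  by rewrite add0n addKn => ->.
rewrite h1 h2 h3; ring.
Qed.

Lemma Xn_neq0 k : ('X^k : P) != 0.
Proof. exact: monic_neq0 (monicXn _ k). Qed.

Definition qe (n j : nat) : nat := if (n < j)%N then tri (j - n.+1) else tri (n - j).

Lemma tri2 n : (tri n * 2 = n * n.+1)%N.
Proof. elim: n => // n IH; rewrite triS mulnDl IH; lia. Qed.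

Lemma qe_eq n j : (n.+1 * j + qe n j = tri n + tri j)%N.
Proof.
rewrite /qe; have t2 := tri2 n; case: ltnP => h.
  have [k ->] : exists k, j = (n.+1 + k)%N by exists (j - n.+1)%N; lia.
  rewrite addKn tri_add triS; nia.
have t2' := tri2 j.
have [k ek] : exists k, n = (k + j)%N by exists (n - j)%N; lia.
subst n; rewrite addnK tri_add; rewrite tri_add in t2; nia.
Qed.

Lemma HH_coef n j :
  (HH n)`_j = (-1) ^+ (n.+1 + j) * 'X^(qe n j) * qbin (n.+1 + n) j.
Proof.
have h := congr1 (fun p : PP => p`_j) (HH_comp n).
rewrite /= coef_comp_scale coefCM cauchy -exprM in h.
move: (qbin (n.+1 + n) j) h => q h.
apply: (mulfI (Xn_neq0 (n.+1 * j))); rewrite h.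
transitivity ((-1) ^+ n.+1 * (-1) ^+ j * 'X^(tri n + tri j) * q).
  rewrite exprD; ring.
rewrite -qe_eq (exprD _ (n.+1 * j)) (exprD (-1) n.+1 j); ring.
Qed.

Definition GG n : PP := \prod_(0 <= i < n) ((1 - cc i.+1 * 'X) * ('X - cc i.+1)).

Lemma HH_factor n : HH n = ('X - 1) * GG n.
Proof.
rewrite /HH big_nat_recl // cc0 /GG big_split /=; ring.
Qed.

Lemma GG1 n : (GG n).[1] = fac n * fac n.
Proof.
rewrite /GG horner_prod /fac -big_split /=; apply: eq_bigr => i _.
by rewrite hornerM hornerD hornerN hornerM hornerX !hornerC mulr1 hornerXsubC.
Qed.

Lemma HH_size n : (size (HH n) <= (n.+1 + n).+1)%N.
Proof.
apply/leq_sizeP => j hj; rewrite HH_coef qbin_gt ?mulr0 //.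
Qed.

Lemma deriv_HH1 n : fac n * fac n = \sum_(j < (n.+1 + n).+1) (HH n)`_j *+ j.
Proof.
have e : (HH n)^`().[1] = fac n * fac n.
  rewrite HH_factor -polyC1 derivM derivXsubC hornerD !hornerM hornerXsubC subrr.
  by rewrite mul0r addr0 hornerC mul1r GG1.
rewrite -e (@horner_coef_wide _ (n.+1 + n)).
  rewrite [RHS]big_ord_recl mulr0n add0r; apply: eq_bigr => i _.
  by rewrite coef_deriv expr1n mulr1 lift0.
apply/leq_sizeP => j hj; rewrite coef_deriv.
by rewrite (leq_sizeP _ _ (HH_size n)) ?mul0rn.
Qed.

Lemma sign_even m k : (-1) ^+ (m.*2 + k) = (-1) ^+ k :> P.
Proof. by rewrite exprD -mul2n mulnC exprM sqrr_sign mul1r. Qed.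

Lemma jacobi_fin n : fac n * fac n =
  \sum_(k < n.+1) ((-1) ^+ k * 'X^(tri k) * qbin (n.+1 + n) (n - k)) *+ (2 * k).+1.
Proof.
rewrite deriv_HH1 (_ : ((n.+1 + n).+1 = n.+1 + n.+1)%N); last by lia.
rewrite big_split_ord /=.
have rev : forall F : nat -> P, \sum_(i < n.+1) F i = \sum_(i < n.+1) F (n - i)%N.
  move=> F; rewrite -(big_mkord xpredT F) big_rev_mkord subn0.
  by apply: eq_bigr => i _; rewrite subSS.
rewrite (rev (fun i => (HH n)`_i *+ i)) -big_split /=; apply: eq_bigr => k _.
have hk : (k <= n)%N by rewrite -ltnS.
rewrite !HH_coef /qe.
rewrite (_ : (n < n - k)%N = false); last by lia.
rewrite (_ : (n < n.+1 + k)%N = true); last by lia.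
rewrite (_ : (n - (n - k) = k)%N); last by lia.
rewrite (_ : (n.+1 + k - n.+1 = k)%N); last by lia.
rewrite (@qbin_sym _ (n.+1 + k)); last by lia.
rewrite (_ : (n.+1 + n - (n.+1 + k) = n - k)%N); last by lia.
rewrite (_ : (n.+1 + (n - k) = (n - k).*2 + k.+1)%N); last by lia.
rewrite (_ : (n.+1 + (n.+1 + k) = (n.+1).*2 + k)%N); last by lia.
rewrite !sign_even exprS mulN1r !mulNr mulNrn addrC.
rewrite -mulrnBr; last by lia.
congr (_ *+ _); lia.
Qed.

Definition eqm (N : nat) (p q : P) := forall i, (i <= N)%N -> p`_i = q`_i.

Lemma eqm_refl N p : eqm N p p. Proof. by []. Qed.
Lemma eqm_sym N p q : eqm N p q -> eqm N q p. Proof. by move=> h i hi; rewrite h. Qed.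
Lemma eqm_trans N p q r : eqm N p q -> eqm N q r -> eqm N p r.
Proof. by move=> h1 h2 i hi; rewrite h1 ?h2. Qed.
Lemma eqm_le N M p q : (M <= N)%N -> eqm N p q -> eqm M p q.
Proof. by move=> hM h i hi; rewrite h // (leq_trans hi). Qed.

Lemma eqm_add N p q p' q' : eqm N p p' -> eqm N q q' -> eqm N (p + q) (p' + q').
Proof. by move=> h1 h2 i hi; rewrite !coefD h1 ?h2. Qed.

Lemma eqm_mul N p q p' q' : eqm N p p' -> eqm N q q' -> eqm N (p * q) (p' * q').
Proof.
move=> h1 h2 i hi; rewrite !coefM; apply: eq_bigr => j _.
rewrite h1 ?h2 //; last by rewrite (leq_trans _ hi) // -ltnS.
by rewrite (leq_trans _ hi) // leq_subr.
Qed.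

Lemma eqm_exp N p q k : eqm N p q -> eqm N (p ^+ k) (q ^+ k).
Proof.
move=> h; elim: k => [|k IH]; first by rewrite !expr0.
by rewrite !exprS; apply: eqm_mul.
Qed.

Lemma eqm_sum N (I : Type) (r : seq I) (F G : I -> P) :
  (forall i, eqm N (F i) (G i)) -> eqm N (\sum_(i <- r) F i) (\sum_(i <- r) G i).
Proof.
move=> h i hi; rewrite !coef_sum; apply: eq_bigr => j _; exact: h.
Qed.

Lemma eqm_prod N (I : Type) (r : seq I) (F G : I -> P) :
  (forall i, eqm N (F i) (G i)) -> eqm N (\prod_(i <- r) F i) (\prod_(i <- r) G i).
Proof.
move=> h; elim: r => [|x r IH]; first by rewrite !big_nil.
by rewrite !big_cons; apply: eqm_mul.
Qed.

Lemma eqm_shift N M k (p q : P) : (N <= M + k)%N -> eqm M p q -> eqm N ('X^k * p) ('X^k * q).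
Proof.
move=> hN h i hi; rewrite !coefXnM; case: ltnP => // hk.
by rewrite h //; lia.
Qed.

Lemma eqm_cancel N (p x y : P) : p`_0 = 1 -> eqm N (p * x) (p * y) -> eqm N x y.
Proof.
move=> p0 h.
suff: forall i, (i <= N)%N -> (x - y)`_i = 0.
  by move=> h' i hi; apply/eqP; rewrite -subr_eq0 -coefB h'.
have hd : forall i, (i <= N)%N -> (p * (x - y))`_i = 0.
  by move=> i hi; rewrite mulrBr coefB h // subrr.
elim/ltn_ind => i IH hi.
have := hd i hi; rewrite coefM big_ord_recl subn0 p0 mul1r big1 ?addr0 //.
move=> j _; rewrite IH ?mulr0 // lift0; have := ltn_ord j; lia.
Qed.

Lemma eqm_kill N (p : P) k : (N < k)%N -> eqm N (p * (1 - 'X^k)) p.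
Proof.
move=> hk i hi; rewrite mulrBr mulr1 coefB coefMXn.
by rewrite (_ : (i < k)%N = true) ?subr0 //; lia.
Qed.

Lemma eqm_muln N (p q : P) c : eqm N p q -> eqm N (p *+ c) (q *+ c).
Proof. by move=> h i hi; rewrite !coefMn h. Qed.

Lemma fac_eqm a b : (a <= b)%N -> eqm a (fac a) (fac b).
Proof.
move=> hab; elim: b hab => [|b IH]; first by rewrite leqn0 => /eqP->.
rewrite leq_eqVlt => /orP[/eqP->//|]; rewrite ltnS => h.
rewrite facS; apply: eqm_trans (IH h) (eqm_sym (eqm_kill _ _)); lia.
Qed.

Lemma fac_coef0 m : (fac m)`_0 = 1.
Proof.
elim: m => [|m IH]; first by rewrite fac0 coef1.
by rewrite facS coef0M IH coefB coef1 coefXn /= subr0 mul1r.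
Qed.

Lemma Eqbin N k : (k <= N)%N -> eqm (N - k) (fac N * qbin (N.+1 + N) (N - k)) 1.
Proof.
move=> hk; set m := (N - k)%N; set q := qbin _ _.
have hp := @qbin_prod (N.+1 + N) m; rewrite -/q in hp.
have hmN : (m <= N)%N by rewrite leq_subr.
have e1 : eqm m (fac N) (fac m) by apply: eqm_sym; apply: fac_eqm.
have e2 : eqm m (fac N) (fac (N.+1 + N - m)).
  apply: eqm_trans e1 _; apply: fac_eqm; lia.
have e3 : eqm m (fac (N.+1 + N)) (fac N).
  apply: eqm_trans (eqm_sym e1); apply: eqm_sym; apply: fac_eqm; lia.
apply: (@eqm_cancel _ (fac N)); first exact: fac_coef0.
apply: eqm_trans (_ : eqm m _ (fac m * (fac (N.+1 + N - m) * q))) _.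
  by apply: eqm_mul => //; apply: eqm_mul.
have -> : fac m * (fac (N.+1 + N - m) * q) = fac (N.+1 + N).
  rewrite -hp; [ring | lia].
by rewrite mulr1.
Qed.

Definition JJ (N : nat) : P := \sum_(k < N.+1) ((-1) ^+ k * 'X^(tri k)) *+ (2 * k).+1.

Lemma jac_trunc N : eqm N (fac N ^+ 3) (JJ N).
Proof.
rewrite (_ : fac N ^+ 3 = fac N * (fac N * fac N)); last by ring.
rewrite jacobi_fin mulr_sumr /JJ; apply: eqm_sum => k.
rewrite mulrnAr; apply: eqm_muln.
rewrite (_ : fac N * _ = (-1) ^+ k * ('X^(tri k) * (fac N * qbin (N.+1 + N) (N - k))));
  last by ring.
rewrite -[X in eqm _ _ X]mulr1 -mulrA; apply: eqm_mul => //.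
apply: (@eqm_shift _ (N - k)); first by have := tri_ge k; lia.
apply: Eqbin; exact: (ltn_ord k).
Qed.

Lemma prod_monomial (I : finType) (a : I -> int) (e : I -> nat) :
  \prod_i (a i *: ('X^(e i) : P)) = (\prod_i a i) *: 'X^(\sum_i e i).
Proof.
under eq_bigr => i _ do rewrite -mul_polyC.
rewrite big_split /= -mul_polyC rmorph_prod /=; congr (_ * _).
by rewrite (big_morph (fun n => ('X^n : P)) (fun x y => exprD _ x y) (expr0 _)).
Qed.

Lemma trunc_eqm (p : P) N : eqm N p (\sum_(m < N.+1) p`_m *: 'X^m).
Proof.
move=> i hi; rewrite coef_sum.
rewrite (bigD1 (Ordinal (hi : (i < N.+1)%N))) //= coefZ coefXn eqxx mulr1 big1 ?addr0 //.
move=> j /eqP ne; rewrite coefZ coefXn (_ : (i == j) = false) ?mulr0 //.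
by apply/eqP => e; apply: ne; apply: val_inj; rewrite /= e.
Qed.

Lemma pow_coef (p : P) l N : (p ^+ l)`_N =
  \sum_(f : {ffun 'I_l -> 'I_N.+1} | (\sum_i (f i : nat) == N)%N) \prod_i p`_(f i).
Proof.
rewrite (@eqm_exp N p _ l (@trunc_eqm p N) N (leqnn N)).
rewrite -[l in _ ^+ l](card_ord l) -prodr_const bigA_distr_bigA /= coef_sum.
rewrite [RHS]big_mkcond /=; apply: eq_bigr => f _.
rewrite prod_monomial coefZ coefXn eq_sym; case: eqP => _; by rewrite ?mulr1 ?mulr0.
Qed.

Definition w (j : nat) : int := (-1) ^+ j.+1 * (2 * j).+1%:R.
Definition SS N : P := 1 - JJ N.

Lemma JJ_coef N m :
  (JJ N)`_m = \sum_(k < N.+1) ((-1) ^+ k *+ (2 * k).+1) * (m == tri k)%:R.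
Proof.
rewrite /JJ coef_sum; apply: eq_bigr => k _.
rewrite coefMn -polyC1 -polyCN -polyC_exp coefCM coefXn; by rewrite mulrnAl.
Qed.

Lemma P3_of_tri k : P3 (tri k).
Proof. by apply/hasP; exists k; rewrite // mem_iota /= add0n ltnS tri_ge. Qed.

Lemma tri_find x : (0 < x)%N -> P3 x -> exists k, [/\ (1 <= k)%N, (k <= x)%N & tri k = x].
Proof.
move=> hx /hasP[k]; rewrite mem_iota /= add0n ltnS => hk /eqP e.
exists k; split => //; case: k e {hk} => // e; rewrite tri0 in e; subst x; done.
Qed.

Lemma prod_pick (F : nat -> int) M k0 :
  (1 <= k0 <= M)%N -> \prod_(1 <= j < M.+1) F j ^+ (tri j == tri k0) = F k0.
Proof.
move=> hk; rewrite (bigD1_seq k0) /=; last exact: iota_uniq.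
  rewrite eqxx expr1 big1 ?mulr1 // => j ne.
  rewrite (_ : (tri j == tri k0) = false) //; apply/eqP => /tri_inj e.
  by rewrite e eqxx in ne.
by rewrite mem_index_iota; lia.
Qed.

Lemma SS_coef_tri N k0 : (1 <= k0 <= N)%N -> (SS N)`_(tri k0) = w k0.
Proof.
move=> hk; rewrite /SS coefB coef1 JJ_coef.
rewrite (_ : (tri k0 == 0)%N = false); last by have := tri_ge k0; lia.
have hk' : (k0 < N.+1)%N by lia.
rewrite (bigD1 (Ordinal hk')) //= eqxx mulr1 big1 ?addr0.
  by rewrite sub0r /w exprS mulN1r mulNr -mulr_natr.
move=> k /eqP ne; rewrite (_ : (tri k0 == tri k) = false) ?mulr0 //.
apply/eqP => /tri_inj e; apply: ne; apply: val_inj; by rewrite /= e.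
Qed.

Lemma SS_coef_0 N m : ~~ ((0 < m)%N && P3 m) -> (SS N)`_m = 0.
Proof.
rewrite /SS coefB coef1 JJ_coef.
case: m => [|m] /= h.
  rewrite (bigD1 ord0) //= big1 ?addr0 ?mulr1 ?subrr //.
  move=> k /eqP ne; rewrite (_ : (0 == tri k)%N = false) ?mulr0 //.
  have hk : (k : nat) != 0%N.
    by apply/eqP => e; apply: ne; apply: val_inj; exact: e.
  have ht := tri_ge k; apply/eqP; lia.
rewrite big1 ?subr0 // => k _.
case: eqP => [e|_]; last by rewrite mulr0.
by rewrite e P3_of_tri in h.
Qed.

Lemma mem_sumn (x : nat) (c : seq nat) : x \in c -> (x <= sumn c)%N.
Proof.
elim: c => //= y c IH; rewrite in_cons => /orP[/eqP->|/IH h]; first exact: leq_addr.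
exact: leq_trans h (leq_addl _ _).
Qed.

Lemma prod_zero (F : nat -> int) (c : seq nat) x :
  x \in c -> F x = 0 -> \prod_(y <- c) F y = 0.
Proof.
elim: c => //= y c IH; rewrite in_cons big_cons => /orP[/eqP->|/IH h] hx.
  by rewrite hx mul0r.
by rewrite h ?mulr0.
Qed.

Lemma prod_mult (F : nat -> int) (r : seq nat) (c : seq nat) :
  \prod_(j <- r) F j ^+ mult (tri j) c = \prod_(x <- c) \prod_(j <- r) F j ^+ (tri j == x).
Proof.
elim: c => [|x c IH]; first by rewrite big_nil; apply: big1 => j _; rewrite expr0.
rewrite big_cons -IH -big_split /=; apply: eq_bigr => j _.
by rewrite /mult /= -exprD eq_sym.
Qed.

Lemma sign_count (c : seq nat) : (-1) ^+ ellplus c = \prod_(x <- c) (-1) ^+ Pplus x :> int.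
Proof.
elim: c => [|x c IH]; first by rewrite big_nil.
by rewrite big_cons -IH /ellplus /= exprD.
Qed.

Lemma in_comps_elt c x : in_comps P3 c -> x \in c ->
  exists k, [/\ (1 <= k)%N, (k <= sumn c)%N & tri k = x].
Proof.
move=> /allP h hx; have /andP[h1 h2] := h x hx.
have [k [k1 k2 k3]] := tri_find h1 h2; exists k; split => //.
exact: leq_trans k2 (mem_sumn hx).
Qed.

Lemma comps_weight N c : in_comps P3 c -> sumn c = N -> \prod_(x <- c) (SS N)`_x = weight1 c.
Proof.
move=> hc hs; rewrite /weight1 prod_mult; apply: eq_big_seq => x hx.
have [k [k1 k2 <-]] := in_comps_elt hc hx.
rewrite prod_pick ?k1 ?k2 // SS_coef_tri // k1 -hs k2.
by [].
Qed.

Lemma comps_zero N c : ~~ in_comps P3 c -> \prod_(x <- c) (SS N)`_x = 0.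
Proof.
by move=> /allPn[x hx hn]; apply: (prod_zero hx); apply: SS_coef_0.
Qed.

Lemma w12 c : in_comps P3 c -> weight1 c = weight2 c.
Proof.
move=> hc; rewrite /weight1 /weight2 !prod_mult sign_count -big_split /=.
apply: eq_big_seq => x hx.
have [k [k1 k2 <-]] := in_comps_elt hc hx.
rewrite !prod_pick ?k1 ?k2 // Pplus_tri.
by rewrite -signr_odd /=.
Qed.

Definition BB N : P := \sum_(l < N.+1) (SS N) ^+ l.

Lemma BB_comps N : (BB N)`_N = sum_comps P3 N weight1.
Proof.
rewrite /BB coef_sum /sum_comps; apply: eq_bigr => l _; rewrite pow_coef.
rewrite [LHS]big_mkcond [RHS]big_mkcond; apply: eq_bigr => f _.
have es : sumn (comp_seq f) = (\sum_i (f i : nat))%N.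
  by rewrite sumnE /comp_seq big_map big_enum.
have ep : \prod_i (SS N)`_(f i) = \prod_(x <- comp_seq f) (SS N)`_x.
  by rewrite /comp_seq big_map big_enum.
rewrite es ep; case: eqP => [hs|]; last by rewrite andbF.
rewrite andbT; case: ifP => h; first by apply: comps_weight; rewrite // es.
by apply: comps_zero; rewrite h.
Qed.

Lemma eqm_prod_in N (r : seq nat) (F G : nat -> P) :
  (forall i, i \in r -> eqm N (F i) (G i)) -> eqm N (\prod_(i <- r) F i) (\prod_(i <- r) G i).
Proof.
elim: r => [|x r IH] h; first by rewrite !big_nil.
rewrite !big_cons; apply: eqm_mul; first by apply: h; rewrite mem_head.
by apply: IH => i hi; apply: h; rewrite in_cons hi orbT.
Qed.

Lemma pow_low (p : P) k i : p`_0 = 0 -> (i < k)%N -> (p ^+ k)`_i = 0.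
Proof.
move=> p0; elim: k i => // k IH i hi.
rewrite exprS coefM big1 // => j _.
case: (nat_of_ord j) (ltn_ord j) => [|j'] hj; first by rewrite p0 mul0r.
rewrite IH ?mulr0 //; lia.
Qed.

Theorem main_p3 N : p3 N = sum_comps P3 N weight1.
Proof.
rewrite -BB_comps /p3 prodrXl.
set Gp := \prod_(1 <= j < N.+1) _.
have hEG : eqm N (fac N * Gp) 1.
  rewrite /fac /Gp -(big_add1 _ _ 0 N.+1 xpredT (fun j => 1 - 'X^j)) /= -big_split /=.
  apply: eqm_trans (_ : eqm N _ (\prod_(j <- index_iota 1 N.+1) (1:P))) _; last by rewrite big1.
  apply: eqm_prod_in => j; rewrite mem_index_iota => /andP[j1 _].
  rewrite big_mkord (eq_bigr (fun k : 'I_N.+1 => ('X^j : P) ^+ k)); last by move=> k _; rewrite exprM.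
  have -> : (1 - 'X^j) * \sum_(k < N.+1) ('X^j : P) ^+ k = 1 * (1 - 'X^(j * N.+1)).
    by rewrite exprM mul1r -[RHS]opprB subrX1 -mulNr opprB.
  apply: (@eqm_kill N 1 (j * N.+1)); rewrite -[N.+1]mul1n mulnA muln1 leq_mul2r; lia.
have hJB : eqm N (fac N ^+ 3 * BB N) 1.
  apply: eqm_trans (_ : eqm N _ (JJ N * BB N)) _.
    exact: eqm_mul (@jac_trunc N) (@eqm_refl N (BB N)).
  have -> : JJ N * BB N = 1 - SS N ^+ N.+1.
    by rewrite /BB -[RHS]opprB subrX1 /SS; ring.
  move=> i hi; rewrite coefB pow_low ?subr0 //.
  by apply: SS_coef_0.
have e : eqm N (Gp ^+ 3) (BB N).
  apply: eqm_trans (_ : eqm N _ (Gp ^+ 3 * (fac N ^+ 3 * BB N))) _.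
    by rewrite -[X in eqm _ X]mulr1; apply: eqm_mul => //; apply: eqm_sym.
  rewrite mulrA -exprMn mulrC.
  apply: eqm_trans (_ : eqm N _ (BB N * 1 ^+ 3)) _; last by rewrite expr1n mulr1.
  apply: eqm_mul => //; apply: eqm_exp; by rewrite mulrC.
exact: e N (leqnn N).
Qed.

Theorem mainTheorem13 (n : nat) :
  p3 n = sum_comps P3 n weight1 /\ sum_comps P3 n weight1 = sum_comps P3 n weight2.
Proof.
split; first exact: main_p3.
rewrite /sum_comps; apply: eq_bigr => l _; apply: eq_bigr => f /andP[h _].
exact: w12.
Qed.
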